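(* Let $\rho$ be a normal ruling of a front of a Legendrian link $\Lambda$, let $o$ be an orientation of $\Lambda$ and $o^\rho$ an orientation of $\Lambda^\rho$. Then the quantity \[ e_2(\rho)\equiv s_-(\rho)+f_+(\rho,o,o^\rho)-f_-(\rho,o,o^\rho) \pmod 2 \] does not depend on the choices of $o$ and $o^\rho$.
   Context: Normal ruling: fix a front diagram of $\Lambda$ whose crossings and cusps have distinct $x$-coordinates. A normal ruling $\rho$ is a set of crossings (switches) such that, letting $\Lambda^\rho$ be the front obtained by resolving each switch into two horizontal non-crossing segments: (i) each component of $\Lambda^\rho$ is planar isotopic to the standard front of the maximal-$tb$ Legendrian unknot; (ii) exactly two components of $\Lambda^\rho$ are incident to each switch; (iii) in a small vertical strip around each switch, the two incident ruling disks are either nested or disjoint. $s_-(\rho)$ is the number of switches that are negative crossings (w.r.t. $o$). A crossing of $\Lambda^\rho$ is flipped if its sign computed from $o$ differs from its sign computed from $o^\rho$; $f_+(\rho,o,o^\rho)$ (resp. $f_-$) is the number of flipped crossings of $\Lambda^\rho$ that are positive (resp. negative) with respect to $o^\rho$. *)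

(* Defs.v *)
From mathcomp Require Import all_boot all_order all_algebra.
Set Implicit Arguments. Unset Strict Implicit. Unset Printing Implicit Defensive.

(* A front whose crossings and cusps have distinct x-coordinates is encoded,
   up to planar isotopy, as the left-to-right list of its elementary events.
   Between consecutive events (at "slice" j, j = 0..size F) the front meets a
   vertical line in n_j points ("strands"), numbered 0,1,... from bottom to top.
   - Cross k : strands k and k+1 cross;
   - LCusp k : a left cusp creates two new strands at positions k, k+1
               (old strands at positions >= k move up by 2);
   - RCusp k : strands k and k+1 are joined by a right cusp
               (old strands above move down by 2).
   Event j lies between slice j and slice j+1. *)
Inductive event := Cross of nat | LCusp of nat | RCusp of nat.

Definition front := seq event.

Definition step (n : nat) (e : event) : nat :=
  match e with Cross _ => n | LCusp _ => n.+2 | RCusp _ => n.-2 end.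

Definition nstr (F : front) (j : nat) : nat := foldl step 0 (take j F).

Definition ev (F : front) (j : nat) : event := nth (Cross 0) F j.

Definition valid_event (n : nat) (e : event) : bool :=
  match e with
  | Cross k => k.+1 < n
  | LCusp k => k <= n
  | RCusp k => k.+1 < n
  end.

Definition valid_front (F : front) : Prop :=
  (forall j, j < size F -> valid_event (nstr F j) (ev F j)) /\
  nstr F (size F) = 0.

Definition is_crossing (F : front) (j : nat) : bool :=
  (j < size F) && (if ev F j is Cross _ then true else false).

Definition swap (k p : nat) : nat :=
  if p == k then k.+1 else if p == k.+1 then k else p.
Definition shup (k p : nat) : nat := if p < k then p else p.+2.
Definition shdn (k p : nat) : nat := if p < k then p else p - 2.

(* An orientation is recorded as the direction of every strand
   at every slice: o j p = true iff the strand at position p of slice j points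
   to the right (increasing x).  Directions are carried along strands, and the
   two branches at a cusp have opposite directions.  [sw] = true means that the
   crossing has been resolved (switch): the two strands then continue
   horizontally at the same positions. *)
Definition orient_step (n : nat) (e : event) (sw : bool) (a b : nat -> bool)
  : Prop :=
  match e with
  | Cross k =>
      if sw then forall p, p < n -> b p = a p
      else forall p, p < n -> b (swap k p) = a p
  | LCusp k => b k != b k.+1 /\ forall p, p < n -> b (shup k p) = a p
  | RCusp k => a k != a k.+1 /\
      forall p, p < n -> p != k -> p != k.+1 -> b (shdn k p) = a p
  end.

(* orientation of the front Lambda^rho obtained from F by resolving every
   crossing whose index is in S into two horizontal non-crossing segments *)
Definition is_orientation_res (F : front) (S : seq nat) (o : nat -> nat -> bool)
  : Prop :=
  forall j, j < size F -> orient_step (nstr F j) (ev F j) (j \in S) (o j) (o j.+1).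

Definition is_orientation (F : front) (o : nat -> nat -> bool) : Prop :=
  is_orientation_res F [::] o.

(* Following the standard combinatorial description, the
   components of Lambda^rho (eyes) are recorded by a pairing of the strands at
   each slice: s p = the position of the other boundary strand of the ruling
   disk containing strand p. *)
Definition pairing (n : nat) (s : nat -> nat) : Prop :=
  forall p, p < n -> [/\ s p < n, s p != p & s (s p) = p].

(* at a switch at strands k, k+1 with partners a = s k, b = s (k+1), the two
   ruling disks are disjoint or nested *)
Definition normal_switch (k a b : nat) : bool :=
  [|| (a < k) && (k.+1 < b), (b < a) && (a < k) | (k.+1 < b) && (b < a)].

Definition ruling_step (n : nat) (e : event) (sw : bool) (s t : nat -> nat)
  : Prop :=
  match e with
  | Cross k => s k != k.+1 /\
      (if sw then normal_switch k (s k) (s k.+1) /\ forall p, p < n -> t p = s p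
       else forall p, p < n -> t (swap k p) = swap k (s p))
  | LCusp k => t k = k.+1 /\ forall p, p < n -> t (shup k p) = shup k (s p)
  | RCusp k => s k = k.+1 /\
      forall p, p < n -> p != k -> p != k.+1 -> t (shdn k p) = shdn k (s p)
  end.

Definition normal_ruling (F : front) (S : seq nat) : Prop :=
  (forall j, j \in S -> is_crossing F j) /\
  exists sigma : nat -> nat -> nat,
    (forall j, j <= size F -> pairing (nstr F j) (sigma j)) /\
    (forall j, j < size F ->
       ruling_step (nstr F j) (ev F j) (j \in S) (sigma j) (sigma j.+1)).

(* Sign of a crossing in a front: positive iff both strands point the same
   way in the x-direction. *)
Definition pos_at (o : nat -> nat -> bool) (j k : nat) : bool := o j k == o j k.+1.

Definition s_minus (F : front) (S : seq nat) (o : nat -> nat -> bool) : nat :=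
  count (fun j => (j \in S) &&
           (if ev F j is Cross k then ~~ pos_at o j k else false))
        (iota 0 (size F)).

Definition f_count (b : bool) (F : front) (S : seq nat) (o orho : nat -> nat -> bool)
  : nat :=
  count (fun j => (j \notin S) &&
           (if ev F j is Cross k then
              (pos_at o j k != pos_at orho j k) && (pos_at orho j k == b)
            else false))
        (iota 0 (size F)).

Definition f_plus := f_count true.
Definition f_minus := f_count false.

Definition e2 (F : front) (S : seq nat) (o orho : nat -> nat -> bool) : int :=
  (((s_minus F S o)%:Z + (f_plus F S o orho)%:Z - (f_minus F S o orho)%:Z) %% 2)%Z.

(* Main.v *)
Require Import Defs.
From mathcomp Require Import all_boot all_order all_algebra zify.

Fixpoint inv (s : seq bool) : nat :=
  if s is x :: s' then (if x then count negb s' else 0) + inv s' else 0.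

Lemma inv_dup s1 s2 b : odd (inv (s1 ++ b :: b :: s2)) = odd (inv (s1 ++ s2)).
Proof.
elim: s1 => [|x s1 IH] /=.
  case: b => /=; rewrite ?oddD ?add0n //.
  by case: (odd (count _ _)); case: (odd (inv _)).
rewrite !oddD IH; case: x => //=; rewrite !count_cat /= !oddD.
by case: (b) => //=; case: (odd (count _ s1)); case: (odd (count _ s2)).
Qed.

Lemma inv_swap s1 s2 x y :
  odd (inv (s1 ++ x :: y :: s2)) = (x != y) (+) odd (inv (s1 ++ y :: x :: s2)).
Proof.
elim: s1 => [|z s1 IH] /=.
  case: x; case: y => /=; rewrite ?oddD ?add0n ?addn0 //=;
  by case: (odd (count _ _)); case: (odd (inv _)).
rewrite !oddD IH; case: z => //=; rewrite ?count_cat /= ?oddD;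
by case: (x); case: (y) => //=; case: (odd (count _ s1)); case: (odd (count _ s2)); case: (odd (inv _)).
Qed.

Lemma nstrS F j : j < size F -> nstr F j.+1 = step (nstr F j) (ev F j).
Proof. by move=> hj; rewrite /nstr (take_nth (Cross 0) hj) -cats1 foldl_cat. Qed.

Lemma map_iota_eq (f g : nat -> bool) m l :
  (forall q, m <= q < m + l -> f q = g q) -> map f (iota m l) = map g (iota m l).
Proof. by move=> h; apply/eq_in_map => q; rewrite mem_iota => /h. Qed.

Lemma iota_split4 n k : k.+1 < n ->
  iota 0 n = iota 0 k ++ k :: k.+1 :: iota k.+2 (n - k.+2).
Proof.
move=> hk; have e : n = k + (n - k.+2).+2 by lia.
by rewrite {1}e iotaD /= add0n.
Qed.

Lemma iota_shift2 (f : nat -> bool) m l :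
  map f (iota (m.+2) l) = map (fun q => f q.+2) (iota m l).
Proof. by rewrite -addn2 addnC iotaDl -map_comp; apply: eq_map => q /=; rewrite add2n. Qed.

Lemma swapK k q : swap k (swap k q) = q.
Proof.
have hne : (k.+1 == k) = false by apply/negbTE; lia.
rewrite /swap; case: (eqVneq q k) => [->|h1]; first by rewrite ?eqxx ?hne /= ?eqxx ?hne.
case: (eqVneq q k.+1) => [->|h2]; first by rewrite eqxx.
by rewrite (negbTE h1) (negbTE h2).
Qed.

Definition xo (a b : nat -> bool) p := a p (+) b p.

Lemma step_inv n e sw (a1 a2 b1 b2 : nat -> bool) :
  valid_event n e -> orient_step n e sw a1 b1 -> orient_step n e sw a2 b2 ->
  odd (inv (map (xo b1 b2) (iota 0 (step n e)))) =
  odd (inv (map (xo a1 a2) (iota 0 n))) (+)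
  (~~ sw && (if e is Cross k then xo a1 a2 k != xo a1 a2 k.+1 else false)).
Proof.
case: e => k hv; rewrite /= in hv.
- case: sw => /= h1 h2.
    rewrite addbF; congr (odd (inv _)); apply: map_iota_eq => q /andP[_ hq].
    by rewrite /xo h1 ?h2.
  rewrite (iota_split4 _ _ hv) !map_cat /= !iota_shift2.
  have hb : forall q, q < n -> xo b1 b2 q = xo a1 a2 (swap k q).
    move=> q hq; have hs : swap k q < n by rewrite /swap; case: ifP => [/eqP e|_]; [lia|case: ifP => [/eqP e|_]; lia].
    by rewrite /xo -h1 // -h2 // swapK.
  rewrite (@map_iota_eq _ (xo a1 a2) 0 k); last first.
    by move=> q /andP[_ hq]; rewrite hb ?add0n; [rewrite /swap; case: ifP => [/eqP|]; [|case: ifP => [/eqP|]] => //; lia | lia].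
  rewrite (@map_iota_eq (fun q => xo b1 b2 q.+2) (fun q => xo a1 a2 q.+2)); last first.
    by move=> q /andP[h hq]; rewrite hb; [rewrite /swap; case: ifP => [/eqP|]; [|case: ifP => [/eqP|]] => //; lia | lia].
  rewrite hb ?(ltnW hv) // hb // /swap eqxx.
  have hne : (k.+1 == k) = false by apply/negbTE; lia.
  rewrite hne eqxx.
  rewrite inv_swap addbC; congr addb; by case: (xo a1 a2 k); case: (xo a1 a2 k.+1).
- case=> [hn1 h1] [hn2 h2]; rewrite /step andbF addbF.
  rewrite (iota_split4 (n.+2) k) ?ltnS // !subSS !map_cat /= iota_shift2.
  have hk : xo b1 b2 k = xo b1 b2 k.+1.
    by move: hn1 hn2; rewrite /xo; case: (b1 k); case: (b1 k.+1); case: (b2 k); case: (b2 k.+1).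
  rewrite hk inv_dup.
  have e : n = k + (n - k) by lia.
  rewrite [in RHS]e iotaD add0n map_cat.
  congr (odd (inv (_ ++ _))).
    apply: map_iota_eq => q /andP[_ hq].
    have hqn : q < n by lia.
    have hs : shup k q = q by rewrite /shup hq.
    by rewrite /xo -h1 // -h2 // hs.
  apply: map_iota_eq => q /andP[hq1 hq2].
  have hq : q < k = false by apply/negbTE; lia.
  have hqn : q < n by lia.
  have hs : shup k q = q.+2 by rewrite /shup hq.
  by rewrite /xo -h1 // -h2 // hs.
- case=> [hn1 h1] [hn2 h2]; rewrite /step andbF addbF.
  rewrite [in RHS](iota_split4 _ _ hv) !map_cat /= iota_shift2.
  have hk : xo a1 a2 k = xo a1 a2 k.+1.
    by move: hn1 hn2; rewrite /xo; case: (a1 k); case: (a1 k.+1); case: (a2 k); case: (a2 k.+1).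
  rewrite hk inv_dup.
  have e : n.-2 = k + (n - k.+2) by lia.
  rewrite e iotaD add0n map_cat.
  congr (odd (inv (_ ++ _))).
    apply: map_iota_eq => q /andP[_ hq].
    have hqn : q < n by lia.
    have hs : shdn k q = q by rewrite /shdn hq.
    by rewrite /xo -h1 // -?h2 // ?hs //; lia.
  apply: map_iota_eq => q /andP[hq1 hq2].
  have hqn : q.+2 < n by lia.
  have hq : q.+2 < k = false by apply/negbTE; lia.
  have hs : shdn k q.+2 = q by rewrite /shdn hq subn2.
  by rewrite /xo -h1 // -?h2 // ?hs //; lia.
Qed.

Definition mixed (F : front) (S : seq nat) (oa ob : nat -> nat -> bool) (j : nat) : bool :=
  (j \notin S) && (if ev F j is Cross k then xo (oa j) (ob j) k != xo (oa j) (ob j) k.+1 else false).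

Lemma mixed_even F S oa ob :
  valid_front F -> is_orientation_res F S oa -> is_orientation_res F S ob ->
  ~~ odd (count (mixed F S oa ob) (iota 0 (size F))).
Proof.
move=> [hv hn] ha hb.
have inv_j : forall j, j <= size F ->
  odd (inv (map (xo (oa j) (ob j)) (iota 0 (nstr F j)))) =
  odd (count (mixed F S oa ob) (iota 0 j)).
  elim=> [|j IH] hj; first by rewrite /nstr take0.
  rewrite nstrS // (step_inv _ _ _ _ _ _ _ (hv j hj) (ha j hj) (hb j hj)) IH ?(ltnW hj) //.
  rewrite -addn1 iotaD count_cat oddD /= addn0 /mixed. by case: (_ && _).
by rewrite -inv_j // hn.
Qed.

Lemma count_xor (p q : nat -> bool) l :
  odd (count p l) (+) odd (count q l) = odd (count (fun x => p x (+) q x) l).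
Proof.
elim: l => [|x l IH] //=; rewrite !oddD -IH.
by case: (p x); case: (q x); case: (odd (count p l)); case: (odd (count q l)).
Qed.

Lemma count_sum3 (p q r t : nat -> bool) l :
  (forall x, p x + q x + r x = t x) -> count p l + count q l + count r l = count t l.
Proof. move=> h; elim: l => [|x l IH] //=; rewrite -IH -h; lia. Qed.

Definition cc (F : front) (S : seq nat) (o r : nat -> nat -> bool) (j : nat) : bool :=
  if ev F j is Cross k then
    (if j \in S then ~~ pos_at o j k else pos_at o j k != pos_at r j k)
  else false.

Lemma e2_cc F S o r : e2 F S o r = Posz (odd (count (cc F S o r) (iota 0 (size F)))).
Proof.
rewrite /e2 -(@count_sum3 (fun j => (j \in S) &&
           (if ev F j is Cross k then ~~ pos_at o j k else false))
  (fun j => (j \notin S) &&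
           (if ev F j is Cross k then
              (pos_at o j k != pos_at r j k) && (pos_at r j k == true)
            else false))
  (fun j => (j \notin S) &&
           (if ev F j is Cross k then
              (pos_at o j k != pos_at r j k) && (pos_at r j k == false)
            else false)) (cc F S o r)); last first.
  move=> x; rewrite /cc; case: (ev F x) => // k; case: (x \in S) => //=;
  by case: (pos_at o x k); case: (pos_at r x k).
set a := s_minus _ _ _; set b := f_plus _ _ _ _; set c := f_minus _ _ _ _.
have -> : (Posz a + Posz b - Posz c = (- Posz c) * 2 + Posz (a + b + c))%R.
  by rewrite !PoszD; lia.
by rewrite modzMDl modz_nat modn2.
Qed.

Theorem lemma3p2 (F : front) (S : seq nat) (o1 o2 orho1 orho2 : nat -> nat -> bool) :
  valid_front F -> normal_ruling F S ->
  is_orientation F o1 -> is_orientation F o2 ->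
  is_orientation_res F S orho1 -> is_orientation_res F S orho2 ->
  e2 F S o1 orho1 = e2 F S o2 orho2.
Proof.
move=> hv _ h1 h2 hr1 hr2; rewrite !e2_cc; congr (Posz (nat_of_bool _)).
set c1 := odd (count _ _); set c2 := odd (count _ _).
suff : c1 (+) c2 = false by case: c1; case: c2.
rewrite /c1 /c2 count_xor.
have := @mixed_even _ _ _ _ hv h1 h2; have := @mixed_even _ _ _ _ hv hr1 hr2.
rewrite -[X in ~~ X -> _]negbK => /negbNE e1 /negbTE e0.
have: odd (count (mixed F [::] o1 o2) (iota 0 (size F))) (+)
      odd (count (mixed F S orho1 orho2) (iota 0 (size F))) = false.
  by rewrite e0; move: e1; case: (odd _).
rewrite count_xor => <-; congr odd; apply: eq_count => j.
rewrite /cc /mixed /pos_at /xo in_nil /=; case: (ev F j) => k; rewrite ?andbF //.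
case: (j \in S) => /=;
by case: (o1 j k); case: (o1 j k.+1); case: (o2 j k); case: (o2 j k.+1);
   case: (orho1 j k); case: (orho1 j k.+1); case: (orho2 j k); case: (orho2 j k.+1).
Qed.
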